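(* In the Nakagami model with parameters $L_c>0$, $L_s>0$, the expected distortion of uncoded transmission, $ED_u(\rho)=\mathrm E\!\left[\frac{1}{1+H+\Gamma}\right]$, satisfies $$\lim_{\rho\to\infty}-\frac{\log ED_u(\rho)}{\log\rho}=\min\{L_s+L_c,1\}.$$
   Context: Nakagami model: for SNR $\rho>0$, $H=\rho H_0$ and $\Gamma=\rho\Gamma_0$, where $H_0,\Gamma_0$ are independent, $H_0$ is Gamma distributed with shape $L_c$ and scale $1/L_c$, and $\Gamma_0$ is Gamma distributed with shape $L_s$ and scale $1/L_s$ (Gamma$(L,\theta)$ density $\frac{1}{\theta^L\Gamma(L)}x^{L-1}e^{-x/\theta}$, $x\ge0$). *)

(* Defs.v *)
From Stdlib Require Import Reals.
Open Scope R_scope.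

Definition imp_int (f : R -> R) (l : R) : Prop :=
  (forall a b, 0 < a -> a <= b -> inhabited (Riemann_integrable f a b)) /\
  (forall eps, 0 < eps -> exists d M, 0 < d /\ 0 < M /\
     forall a b (pr : Riemann_integrable f a b),
       0 < a -> a < d -> M < b -> Rabs (RiemannInt pr - l) < eps).

(* Unnormalized Gamma(L, 1/L) density on x > 0: x^(L-1) e^(-L x).
   The normalizing constant (Gamma(L) / L^L) is its integral over (0,oo). *)
Definition gamma_kernel (L x : R) : R := Rpower x (L - 1) * exp (- (L * x)).

(* v = E[1/(1+H+Gamma)] with H = rho*H0, Gamma = rho*Gamma0,
   H0 ~ Gamma(Lc,1/Lc), Gamma0 ~ Gamma(Ls,1/Ls) independent,
   computed as the iterated integral
   int_0^oo p_c(x) ( int_0^oo p_s(y) / (1 + rho x + rho y) dy ) dx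
   where p_L(x) = gamma_kernel L x / c_L, c_L = int_0^oo gamma_kernel L. *)
Definition ED_spec (Lc Ls rho v : R) : Prop :=
  exists (cc cs : R) (g : R -> R),
    imp_int (gamma_kernel Lc) cc /\
    imp_int (gamma_kernel Ls) cs /\
    (forall x, 0 < x ->
       imp_int (fun y => gamma_kernel Ls y / cs / (1 + rho * x + rho * y)) (g x)) /\
    imp_int (fun x => gamma_kernel Lc x / cc * g x) v.

(* Main.v *)
Require Import Defs.
From Stdlib Require Import Reals.
From Stdlib Require Import Lra Psatz Classical FunctionalExtensionality ClassicalEpsilon.
From Coquelicot Require Import Coquelicot.
Open Scope R_scope.


Lemma imp_int_ex f l : imp_int f l -> forall a b, 0 < a -> a <= b -> ex_RInt f a b.
Proof.
  intros [H1 _] a b ha hab. destruct (H1 a b ha hab) as [pr].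
  now apply ex_RInt_Reals_1.
Qed.

Lemma imp_int_lim f l : imp_int f l -> forall eps, 0 < eps ->
  exists d M, 0 < d /\ d <= M /\
    forall a b, 0 < a -> a < d -> M < b -> Rabs (RInt f a b - l) < eps.
Proof.
  intros [H1 H2] eps he. destruct (H2 eps he) as (d & M & hd & hM & H).
  exists (Rmin d M), M. split; [apply Rmin_glb_lt; lra|]. split; [apply Rmin_r|].
  intros a b ha had hb.
  assert (a < d) by (eapply Rlt_le_trans; [exact had| apply Rmin_l]).
  assert (a <= M) by (assert (Rmin d M <= M) by apply Rmin_r; lra).
  destruct (H1 a b ha ltac:(lra)) as [pr].
  rewrite (RInt_Reals f a b pr). apply H; lra.
Qed.

Lemma imp_int_intro f l :
  (forall a b, 0 < a -> a <= b -> ex_RInt f a b) ->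
  (forall eps, 0 < eps -> exists d M, 0 < d /\ d <= M /\
    forall a b, 0 < a -> a < d -> M < b -> Rabs (RInt f a b - l) < eps) ->
  imp_int f l.
Proof.
  intros H1 H2. split.
  - intros a b ha hab. constructor. apply ex_RInt_Reals_0. now apply H1.
  - intros eps he. destruct (H2 eps he) as (d & M & hd & hM & H).
    exists d, M. split; [lra|]. split; [lra|].
    intros a b pr ha had hb. rewrite <- (RInt_Reals f a b pr). apply H; lra.
Qed.

Lemma imp_int_le f g l m : imp_int f l -> imp_int g m ->
  (forall x, 0 < x -> f x <= g x) -> l <= m.
Proof.
  intros Hf Hg Hle. apply Rnot_lt_le. intro Hlt.
  set (eps := (l - m) / 2).
  destruct (imp_int_lim f l Hf eps ltac:(unfold eps; lra)) as (d1 & M1 & hd1 & hM1 & H1).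
  destruct (imp_int_lim g m Hg eps ltac:(unfold eps; lra)) as (d2 & M2 & hd2 & hM2 & H2).
  set (a := Rmin d1 d2 / 2). set (b := Rmax M1 M2 + 1).
  assert (ha : 0 < a) by (unfold a; generalize (Rmin_glb_lt d1 d2 0 hd1 hd2); lra).
  assert (had1 : a < d1) by (unfold a; generalize (Rmin_l d1 d2) (Rmin_glb_lt d1 d2 0 hd1 hd2); lra).
  assert (had2 : a < d2) by (unfold a; generalize (Rmin_r d1 d2) (Rmin_glb_lt d1 d2 0 hd1 hd2); lra).
  assert (hb1 : M1 < b) by (unfold b; generalize (Rmax_l M1 M2); lra).
  assert (hb2 : M2 < b) by (unfold b; generalize (Rmax_r M1 M2); lra).
  specialize (H1 a b ha had1 hb1). specialize (H2 a b ha had2 hb2).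
  assert (RInt f a b <= RInt g a b).
  { apply RInt_le; try lra.
    - apply (imp_int_ex f l Hf); lra.
    - apply (imp_int_ex g m Hg); lra.
    - intros x hx. apply Hle. lra. }
  apply Rabs_def2 in H1. apply Rabs_def2 in H2. unfold eps in *. lra.
Qed.


Lemma RInt_plus' f g a b : ex_RInt f a b -> ex_RInt g a b ->
  RInt (fun x => f x + g x) a b = RInt f a b + RInt g a b.
Proof. intros. apply (RInt_plus f g); auto. Qed.

Lemma ex_RInt_plus' f g a b : ex_RInt f a b -> ex_RInt g a b ->
  ex_RInt (fun x => f x + g x) a b.
Proof. intros. apply (ex_RInt_plus f g); auto. Qed.

Lemma RInt_scal' f a b c : ex_RInt f a b ->
  RInt (fun x => c * f x) a b = c * RInt f a b.
Proof. intros. apply (RInt_scal f a b c); auto. Qed.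

Lemma ex_RInt_scal' f a b c : ex_RInt f a b -> ex_RInt (fun x => c * f x) a b.
Proof. intros. apply (ex_RInt_scal f a b c); auto. Qed.

Lemma RInt_const' a b c : RInt (fun _ => c) a b = (b - a) * c.
Proof. rewrite RInt_const. reflexivity. Qed.

Lemma RInt_lower a b m f : a <= b -> ex_RInt f a b ->
  (forall x, a <= x <= b -> m <= f x) -> (b - a) * m <= RInt f a b.
Proof.
  intros hab hf H. rewrite <- RInt_const'. apply RInt_le; auto.
  apply ex_RInt_const. intros x hx; apply H; lra.
Qed.

Lemma imp_int_plus f g l m : imp_int f l -> imp_int g m ->
  imp_int (fun x => f x + g x) (l + m).
Proof.
  intros Hf Hg. apply imp_int_intro.
  - intros a b ha hab. apply ex_RInt_plus'; [apply (imp_int_ex f l)|apply (imp_int_ex g m)]; auto.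
  - intros eps he.
    destruct (imp_int_lim f l Hf (eps/2) ltac:(lra)) as (d1 & M1 & hd1 & hM1 & H1).
    destruct (imp_int_lim g m Hg (eps/2) ltac:(lra)) as (d2 & M2 & hd2 & hM2 & H2).
    exists (Rmin d1 d2), (Rmax M1 M2).
    generalize (Rmin_l d1 d2) (Rmin_r d1 d2) (Rmax_l M1 M2) (Rmax_r M1 M2)
      (Rmin_glb_lt d1 d2 0 hd1 hd2); intros.
    split; [lra|]. split; [lra|].
    intros a b ha had hb.
    rewrite RInt_plus'; [|apply (imp_int_ex f l Hf); lra|apply (imp_int_ex g m Hg); lra].
    specialize (H1 a b ha ltac:(lra) ltac:(lra)). specialize (H2 a b ha ltac:(lra) ltac:(lra)).
    apply Rabs_def2 in H1. apply Rabs_def2 in H2. apply Rabs_def1; lra.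
Qed.

Lemma imp_int_scal f l c : imp_int f l -> imp_int (fun x => c * f x) (c * l).
Proof.
  intros Hf. apply imp_int_intro.
  - intros a b ha hab. apply ex_RInt_scal'. apply (imp_int_ex f l); auto.
  - intros eps he.
    assert (hc : 0 < Rabs c + 1) by (generalize (Rabs_pos c); lra).
    destruct (imp_int_lim f l Hf (eps/(Rabs c + 1))) as (d & M & hd & hM & H).
    { apply Rdiv_lt_0_compat; lra. }
    exists d, M. split; [lra|]. split; [lra|].
    intros a b ha had hb.
    rewrite RInt_scal'; [|apply (imp_int_ex f l Hf); lra].
    replace (c * RInt f a b - c * l) with (c * (RInt f a b - l)) by ring.
    rewrite Rabs_mult. specialize (H a b ha had hb).
    apply Rle_lt_trans with ((Rabs c + 1) * Rabs (RInt f a b - l)).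
    + apply Rmult_le_compat_r; [apply Rabs_pos| lra].
    + apply Rmult_lt_reg_l with (/ (Rabs c + 1)).
      * apply Rinv_0_lt_compat; lra.
      * rewrite <- Rmult_assoc, Rinv_l by lra. unfold Rdiv in H. lra.
Qed.

Lemma imp_int_ext f g l : (forall x, f x = g x) -> imp_int f l -> imp_int g l.
Proof.
  intros H Hf. replace g with f; auto. apply functional_extensionality; auto.
Qed.

Lemma imp_int_partial_le f l : imp_int f l -> (forall x, 0 < x -> 0 <= f x) ->
  forall a b, 0 < a -> a <= b -> RInt f a b <= l.
Proof.
  intros Hf Hpos a b ha hab. apply Rnot_lt_le. intro Hlt.
  destruct (imp_int_lim f l Hf ((RInt f a b - l)/2) ltac:(lra)) as (d & M & hd & hM & H).
  set (a' := Rmin a d / 2). set (b' := Rmax b M + 1).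
  generalize (Rmin_l a d) (Rmin_r a d) (Rmax_l b M) (Rmax_r b M)
      (Rmin_glb_lt a d 0 ha hd); intros.
  assert (0 < a') by (unfold a'; lra).
  specialize (H a' b' ltac:(auto) ltac:(unfold a'; lra) ltac:(unfold b'; lra)).
  assert (E1 : ex_RInt f a' a) by (apply (imp_int_ex f l Hf); unfold a'; lra).
  assert (E2 : ex_RInt f a b) by (apply (imp_int_ex f l Hf); lra).
  assert (E3 : ex_RInt f b b') by (apply (imp_int_ex f l Hf); unfold b'; lra).
  assert (Q : RInt f a' b' = RInt f a' a + RInt f a b + RInt f b b').
  { rewrite <- (RInt_Chasles f a' b b') by (auto; apply (ex_RInt_Chasles f a' a b); auto).
    rewrite <- (RInt_Chasles f a' a b) by auto. reflexivity. }
  assert (0 <= RInt f a' a).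
  { apply RInt_ge_0; auto. unfold a'; lra. intros x hx; apply Hpos; lra. }
  assert (0 <= RInt f b b').
  { apply RInt_ge_0; auto. unfold b'; lra. intros x hx; apply Hpos; lra. }
  apply Rabs_def2 in H. lra.
Qed.

Lemma imp_int_bound f l B : imp_int f l ->
  (forall a b, 0 < a -> a <= b -> RInt f a b <= B) -> l <= B.
Proof.
  intros Hf HB. apply Rnot_lt_le. intro Hlt.
  destruct (imp_int_lim f l Hf ((l - B)/2) ltac:(lra)) as (d & M & hd & hM & H).
  specialize (H (d/2) (M+1) ltac:(lra) ltac:(lra) ltac:(lra)).
  specialize (HB (d/2) (M+1) ltac:(lra) ltac:(lra)).
  apply Rabs_def2 in H. lra.
Qed.

Lemma imp_int_nonneg f l : imp_int f l -> (forall x, 0 < x -> 0 <= f x) -> 0 <= l.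
Proof.
  intros Hf Hp. replace 0 with (RInt f 1 1) by (rewrite RInt_point; reflexivity).
  apply (imp_int_partial_le f l Hf Hp); lra.
Qed.


Lemma ex_RInt_cont f a b : 0 < a -> a <= b ->
  (forall x, 0 < x -> continuity_pt f x) -> ex_RInt f a b.
Proof.
  intros ha hab Hc. apply (@ex_RInt_continuous R_CompleteNormedModule). intros z hz.
  rewrite Rmin_left in hz by lra. apply continuity_pt_filterlim. apply Hc; lra.
Qed.

Lemma imp_int_of_bounded f B :
  (forall x, 0 < x -> continuity_pt f x) -> (forall x, 0 < x -> 0 <= f x) ->
  (forall a b, 0 < a -> a <= b -> RInt f a b <= B) -> exists l, imp_int f l.
Proof.
  intros Hc Hp HB.
  set (E := fun r => exists a b, 0 < a /\ a <= b /\ r = RInt f a b).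
  assert (Hb : bound E) by (exists B; intros r (a & b & ha & hab & ->); auto).
  assert (Hne : exists r, E r) by (exists (RInt f 1 1); exists 1, 1; repeat split; lra).
  destruct (completeness E Hb Hne) as [l [Hub Hlub]].
  exists l. apply imp_int_intro.
  - intros a b ha hab. apply ex_RInt_cont; auto.
  - intros eps he.
    assert (exists r, E r /\ l - eps < r).
    { apply NNPP. intro Hn. assert (l <= l - eps); [|lra].
      apply Hlub. intros r Hr. apply Rnot_lt_le. intro; apply Hn; eauto. }
    destruct H as (r & (a0 & b0 & ha0 & hab0 & ->) & Hr).
    exists a0, b0. split; [lra|]. split; [lra|].
    intros a b ha had hb.
    assert (E1 : ex_RInt f a a0) by (apply ex_RInt_cont; auto; lra).
    assert (E2 : ex_RInt f a0 b0) by (apply ex_RInt_cont; auto; lra).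
    assert (E3 : ex_RInt f b0 b) by (apply ex_RInt_cont; auto; lra).
    assert (Q : RInt f a b = RInt f a a0 + RInt f a0 b0 + RInt f b0 b).
    { rewrite <- (RInt_Chasles f a b0 b) by (auto; apply (ex_RInt_Chasles f a a0 b0); auto).
      rewrite <- (RInt_Chasles f a a0 b0) by auto. reflexivity. }
    assert (0 <= RInt f a a0).
    { apply RInt_ge_0; auto; try lra. intros x hx; apply Hp; lra. }
    assert (0 <= RInt f b0 b).
    { apply RInt_ge_0; auto; try lra. intros x hx; apply Hp; lra. }
    assert (RInt f a b <= l) by (apply Hub; exists a, b; repeat split; lra).
    apply Rabs_def1; lra.
Qed.

Lemma imp_int_dominated f g m :
  (forall x, 0 < x -> continuity_pt f x) -> (forall x, 0 < x -> 0 <= f x) ->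
  (forall x, 0 < x -> f x <= g x) -> imp_int g m -> exists l, imp_int f l /\ l <= m.
Proof.
  intros Hc Hp Hle Hg.
  destruct (imp_int_of_bounded f m Hc Hp) as [l Hl].
  - intros a b ha hab. apply Rle_trans with (RInt g a b).
    + apply RInt_le; auto. apply ex_RInt_cont; auto. apply (imp_int_ex g m Hg); auto.
      intros x hx; apply Hle; lra.
    + apply (imp_int_partial_le g m Hg); auto. intros x hx. specialize (Hp x hx); specialize (Hle x hx); lra.
  - exists l. split; auto. apply (imp_int_le f g); auto.
Qed.


Definition kern (p L x : R) : R := Rpower x (p - 1) * exp (- (L * x)).

Lemma exp_le_mono x y : x <= y -> exp x <= exp y.
Proof. intros [H|H]; [left; now apply exp_increasing| subst; lra]. Qed.

Lemma cont_of_lim f x l : derivable_pt_lim f x l -> continuity_pt f x.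
Proof. intros H. apply derivable_continuous_pt. exists l. exact H. Qed.

Lemma Rpower_cont y x : 0 < x -> continuity_pt (fun t => Rpower t y) x.
Proof. intros hx. eapply cont_of_lim. apply derivable_pt_lim_power; auto. Qed.

Lemma expl_cont c x : continuity_pt (fun t => exp (- (c * t))) x.
Proof.
  apply cont_of_lim with (l := - c * exp (- (c * x))). apply is_derive_Reals.
  auto_derive; auto. ring.
Qed.

Lemma kern_cont p L x : 0 < x -> continuity_pt (kern p L) x.
Proof.
  intros hx. unfold kern. apply (continuity_pt_mult (fun t => Rpower t (p-1)) (fun t => exp (- (L*t)))).
  apply Rpower_cont; auto. apply expl_cont.
Qed.

Lemma kern_pos p L x : 0 < kern p L x.
Proof. unfold kern, Rpower. apply Rmult_lt_0_compat; apply exp_pos. Qed.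

Lemma pow_int p a b : 0 < p -> 0 < a -> a <= b ->
  RInt (fun x => Rpower x (p - 1)) a b = (Rpower b p - Rpower a p) / p.
Proof.
  intros hp ha hab. apply is_RInt_unique.
  replace ((Rpower b p - Rpower a p) / p) with
    (minus ((fun x => /p * Rpower x p) b) ((fun x => /p * Rpower x p) a))
    by (unfold minus, plus, opp; simpl; field; lra).
  apply (@is_RInt_derive R_CompleteNormedModule (fun x => /p * Rpower x p)).
  - intros x hx. rewrite Rmin_left in hx by lra.
    replace (Rpower x (p - 1)) with (/p * (p * Rpower x (p - 1))) by (field; lra).
    apply (is_derive_scal (fun t => Rpower t p)). apply is_derive_Reals.
    apply derivable_pt_lim_power. lra.
  - intros x hx. rewrite Rmin_left in hx by lra.
    apply continuity_pt_filterlim. apply Rpower_cont. lra.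
Qed.

Lemma exp_int c a b : 0 < c ->
  RInt (fun x => exp (- (c * x))) a b = (exp (- (c * a)) - exp (- (c * b))) / c.
Proof.
  intros hc. apply is_RInt_unique.
  replace ((exp (- (c * a)) - exp (- (c * b))) / c) with
    (minus ((fun x => - / c * exp (- (c * x))) b) ((fun x => - / c * exp (- (c * x))) a))
    by (unfold minus, plus, opp; simpl; field; lra).
  apply (@is_RInt_derive R_CompleteNormedModule (fun x => - / c * exp (- (c * x)))).
  - intros x hx. auto_derive; auto. field. lra.
  - intros x hx. apply continuity_pt_filterlim. apply expl_cont.
Qed.


Lemma kern_le_pow p L x : 0 <= L -> 0 < x -> x <= 1 -> kern p L x <= Rpower x (p - 1).
Proof.
  intros hL hx hx1. unfold kern.
  assert (exp (- (L * x)) <= 1).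
  { rewrite <- exp_0. apply exp_le_mono. nra. }
  assert (0 < Rpower x (p-1)) by (unfold Rpower; apply exp_pos). nra.
Qed.

Lemma ln_sq_le x : 1 <= x -> ln x * ln x <= 4 * x.
Proof.
  intros hx. set (u := ln x).
  assert (hu : 0 <= u) by (unfold u; rewrite <- ln_1; apply ln_le; lra).
  assert (E : x = exp (u/2) * exp (u/2)) by (rewrite <- exp_plus; unfold u; replace (ln x / 2 + ln x / 2) with (ln x) by field; rewrite exp_ln; lra).
  generalize (exp_ineq1_le (u/2)); intro H. rewrite E. nra.
Qed.

Lemma kern_le_exp p L x : 0 < L -> 1 <= x ->
  kern p L x <= exp (2 * (p-1)^2 / L) * exp (- (L/2 * x)).
Proof.
  intros hL hx. unfold kern, Rpower. rewrite <- !exp_plus. apply exp_le_mono.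
  generalize (ln_sq_le x hx). set (u := ln x). intro H.
  assert (0 <= (L*u - 4*(p-1))^2 / (8*L)) by (unfold Rdiv; apply Rmult_le_pos; [apply pow2_ge_0| left; apply Rinv_0_lt_compat; lra]).
  assert (Q : (L*u - 4*(p-1))^2 / (8*L) = L*u*u/8 + 2*(p-1)^2/L - (p-1)*u) by (field; lra).
  nra.
Qed.

Lemma ex_RInt_kern p L a b : 0 < a -> a <= b -> ex_RInt (kern p L) a b.
Proof. intros. apply ex_RInt_cont; auto. intros; apply kern_cont; auto. Qed.

Lemma kern_bound p L : 0 < p -> 0 < L ->
  exists B, 0 < B /\ forall a b, 0 < a -> a <= b -> RInt (kern p L) a b <= B.
Proof.
  intros hp hL. set (K := exp (2 * (p-1)^2 / L)).
  assert (hK : 0 < K) by apply exp_pos.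
  assert (B1 : forall a b, 0 < a -> a <= b -> b <= 1 -> RInt (kern p L) a b <= 1/p).
  { intros a b ha hab hb.
    apply Rle_trans with (RInt (fun x => Rpower x (p-1)) a b).
    - apply RInt_le; auto. apply ex_RInt_kern; auto.
      apply ex_RInt_cont; auto. intros; apply Rpower_cont; auto.
      intros x hx. apply kern_le_pow; lra.
    - rewrite pow_int by auto.
      assert (Rpower b p <= 1).
      { unfold Rpower. rewrite <- exp_0. apply exp_le_mono.
        assert (ln b <= 0) by (rewrite <- ln_1; apply ln_le; lra). nra. }
      assert (0 < Rpower a p) by (unfold Rpower; apply exp_pos).
      unfold Rdiv. apply Rmult_le_compat_r. left; apply Rinv_0_lt_compat; lra. lra. }
  assert (B2 : forall a b, 1 <= a -> a <= b -> RInt (kern p L) a b <= K * (2 / L)).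
  { intros a b ha hab.
    apply Rle_trans with (RInt (fun x => K * exp (- (L/2 * x))) a b).
    - apply RInt_le; auto. apply ex_RInt_kern; lra.
      apply ex_RInt_scal'. apply ex_RInt_cont; try lra. intros; apply expl_cont.
      intros x hx. apply kern_le_exp; lra.
    - rewrite RInt_scal'. rewrite exp_int by lra.
      apply Rmult_le_compat_l; [lra|].
      assert (exp (- (L / 2 * a)) <= 1) by (rewrite <- exp_0; apply exp_le_mono; nra).
      generalize (exp_pos (- (L / 2 * b))); intro.
      replace (2 / L) with (1 / (L/2)) by (field; lra).
      unfold Rdiv. apply Rmult_le_compat_r. left; apply Rinv_0_lt_compat; lra. lra.
      apply ex_RInt_cont; try lra. intros; apply expl_cont. }
  exists (1/p + K * (2/L)).
  assert (0 < 1/p) by (apply Rdiv_lt_0_compat; lra).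
  assert (0 < K * (2/L)) by (apply Rmult_lt_0_compat; auto; apply Rdiv_lt_0_compat; lra).
  split; [lra|].
  intros a b ha hab.
  destruct (Rle_lt_dec b 1) as [hb|hb].
  - specialize (B1 a b ha hab hb). lra.
  - destruct (Rle_lt_dec 1 a) as [ha1|ha1].
    + specialize (B2 a b ha1 hab). lra.
    + rewrite <- (RInt_Chasles (kern p L) a 1 b) by (apply ex_RInt_kern; lra).
      specialize (B1 a 1 ha ltac:(lra) ltac:(lra)). specialize (B2 1 b ltac:(lra) ltac:(lra)).
      change (plus (RInt (kern p L) a 1) (RInt (kern p L) 1 b)) with (RInt (kern p L) a 1 + RInt (kern p L) 1 b).
      lra.
Qed.

Lemma kern_lower_pt p L t x : 0 < p -> 0 < L -> 0 < t -> t <= 1 -> t/2 <= x <= t ->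
  Rpower (t/2) p / t * exp (- L) <= kern p L x.
Proof.
  intros hp hL ht ht1 hx. unfold kern.
  replace (p - 1) with (p + - (1)) by ring.
  rewrite Rpower_plus, Rpower_Ropp, Rpower_1 by lra.
  assert (H1 : Rpower (t/2) p <= Rpower x p) by (apply Rle_Rpower_l; lra).
  assert (H2 : / t <= / x) by (apply Rinv_le_contravar; lra).
  assert (H3 : exp (- L) <= exp (- (L * x))) by (apply exp_le_mono; nra).
  assert (P1 : 0 < Rpower (t/2) p) by (unfold Rpower; apply exp_pos).
  assert (P2 : 0 < / t) by (apply Rinv_0_lt_compat; lra).
  assert (P3 : 0 < exp (- L)) by apply exp_pos.
  unfold Rdiv.
  assert (Rpower (t/2) p * /t <= Rpower x p * /x) by (apply Rmult_le_compat; lra).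
  apply Rmult_le_compat; try lra. apply Rmult_le_pos; lra.
Qed.

Lemma kern_int_lower p L t : 0 < p -> 0 < L -> 0 < t -> t <= 1 ->
  Rpower (t/2) p * exp (- L) / 2 <= RInt (kern p L) (t/2) t.
Proof.
  intros hp hL ht ht1.
  replace (Rpower (t/2) p * exp (- L) / 2) with ((t - t/2) * (Rpower (t/2) p / t * exp (- L)))
    by (field; lra).
  apply RInt_lower; try lra. apply ex_RInt_kern; lra.
  intros x hx. apply kern_lower_pt; auto.
Qed.

Lemma kern_lim_lower p L l : 0 < p -> 0 < L -> imp_int (kern p L) l ->
  Rpower (1/2) p * exp (- L) / 2 <= l.
Proof.
  intros hp hL Hl. eapply Rle_trans. apply (kern_int_lower p L 1); lra.
  apply (imp_int_partial_le _ _ Hl); try lra. intros; left; apply kern_pos.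
Qed.

Lemma kern_imp p L : 0 < p -> 0 < L -> exists l, imp_int (kern p L) l.
Proof.
  intros hp hL. destruct (kern_bound p L hp hL) as (B & hB & HB).
  apply (imp_int_of_bounded (kern p L) B); auto.
  - intros; apply kern_cont; auto.
  - intros; left; apply kern_pos.
Qed.


Lemma cont_mul f g x : continuity_pt f x -> continuity_pt g x ->
  continuity_pt (fun y => f y * g y) x.
Proof. intros. now apply (continuity_pt_mult f g). Qed.

Lemma cont_div f g x : continuity_pt f x -> continuity_pt g x -> g x <> 0 ->
  continuity_pt (fun y => f y / g y) x.
Proof. intros. now apply (continuity_pt_div f g). Qed.

Lemma cont_const c x : continuity_pt (fun _ => c) x.
Proof. apply continuity_pt_const. intros a b; reflexivity. Qed.

Lemma cont_aff c d x : continuity_pt (fun y => c + d * y) x.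
Proof. apply cont_of_lim with (l := d). apply is_derive_Reals. auto_derive; auto; ring. Qed.

Lemma imp_int_norm L c : imp_int (kern L L) c -> 0 < c ->
  imp_int (fun y => gamma_kernel L y / c) 1.
Proof.
  intros H hc. replace 1 with (/ c * c) by (field; lra).
  apply (imp_int_ext (fun y => / c * kern L L y)).
  - intros y. unfold kern, gamma_kernel. field. lra.
  - now apply imp_int_scal.
Qed.

Lemma part1 Lc Ls rho : 0 < Lc -> 0 < Ls -> 0 < rho -> exists v, ED_spec Lc Ls rho v.
Proof.
  intros hc hs hr.
  destruct (kern_imp Lc Lc hc hc) as [cc Hcc].
  destruct (kern_imp Ls Ls hs hs) as [cs Hcs].
  assert (hcc : 0 < cc).
  { eapply Rlt_le_trans; [|apply (kern_lim_lower Lc Lc cc hc hc Hcc)].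
    generalize (exp_pos (- Lc)) (exp_pos (Lc * ln (1/2))). unfold Rpower. nra. }
  assert (hcs : 0 < cs).
  { eapply Rlt_le_trans; [|apply (kern_lim_lower Ls Ls cs hs hs Hcs)].
    generalize (exp_pos (- Ls)) (exp_pos (Ls * ln (1/2))). unfold Rpower. nra. }
  pose proof (imp_int_norm Ls cs Hcs hcs) as Hps.
  pose proof (imp_int_norm Lc cc Hcc hcc) as Hpc.
  set (inner := fun x y => gamma_kernel Ls y / cs / (1 + rho * x + rho * y)).
  assert (Hex : forall x, exists l, 0 < x -> imp_int (inner x) l).
  { intros x. destruct (Rlt_dec 0 x) as [hx|hx]; [|exists 0; intros; lra].
    destruct (imp_int_dominated (inner x) (fun y => gamma_kernel Ls y / cs) 1) as (l & Hl & _);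
      auto.
    - intros y hy. unfold inner. apply cont_div;
        [apply cont_div; [apply kern_cont; auto| apply cont_const| lra]
        | apply (cont_aff (1 + rho * x) rho) | nra].
    - intros y hy. unfold inner. apply Rmult_le_pos. apply Rmult_le_pos.
      left; apply kern_pos. left; apply Rinv_0_lt_compat; lra. left; apply Rinv_0_lt_compat; nra.
    - intros y hy. unfold inner.
      assert (0 <= gamma_kernel Ls y / cs) by (apply Rmult_le_pos; [left; apply kern_pos| left; apply Rinv_0_lt_compat; lra]).
      assert (/ (1 + rho * x + rho * y) <= 1).
      { rewrite <- Rinv_1. apply Rinv_le_contravar; nra. }
      unfold Rdiv at 1. nra.
    - exists l; auto. }
  set (g := fun x => proj1_sig (constructive_indefinite_description _ (Hex x))).
  assert (Hg : forall x, 0 < x -> imp_int (inner x) (g x)).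
  { intros x hx. unfold g. destruct (constructive_indefinite_description _ (Hex x)) as [l Hl]. simpl. auto. }
  assert (Hinner_nn : forall x y, 0 < x -> 0 < y -> 0 <= inner x y).
  { intros x y hx hy. unfold inner. apply Rmult_le_pos. apply Rmult_le_pos.
      left; apply kern_pos. left; apply Rinv_0_lt_compat; lra. left; apply Rinv_0_lt_compat; nra. }
  assert (Hg0 : forall x, 0 < x -> 0 <= g x).
  { intros x hx. apply (imp_int_nonneg (inner x)); auto. }
  assert (Hg1 : forall x, 0 < x -> g x <= 1).
  { intros x hx. apply (imp_int_le (inner x) (fun y => gamma_kernel Ls y / cs)); auto.
    intros y hy. unfold inner.
    assert (0 <= gamma_kernel Ls y / cs) by (apply Rmult_le_pos; [left; apply kern_pos| left; apply Rinv_0_lt_compat; lra]).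
    assert (/ (1 + rho * x + rho * y) <= 1).
    { rewrite <- Rinv_1. apply Rinv_le_contravar; nra. }
    unfold Rdiv at 1. nra. }
  assert (Hlip : forall x1 x2, 0 < x1 -> 0 < x2 -> g x1 <= g x2 + rho * Rabs (x1 - x2)).
  { intros x1 x2 h1 h2. replace (g x2 + rho * Rabs (x1 - x2)) with (g x2 + rho * Rabs (x1 - x2) * 1) by ring.
    apply (imp_int_le (inner x1) (fun y => inner x2 y + rho * Rabs (x1 - x2) * (gamma_kernel Ls y / cs))).
    - auto.
    - apply imp_int_plus; auto. apply imp_int_scal; auto.
    - intros y hy. unfold inner.
      set (P := gamma_kernel Ls y / cs).
      assert (hP : 0 <= P) by (unfold P; apply Rmult_le_pos; [left; apply kern_pos| left; apply Rinv_0_lt_compat; lra]).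
      set (D1 := 1 + rho * x1 + rho * y). set (D2 := 1 + rho * x2 + rho * y).
      assert (hD1 : 1 <= D1) by (unfold D1; nra). assert (hD2 : 1 <= D2) by (unfold D2; nra).
      assert (Q : / D1 - / D2 = rho * (x2 - x1) / (D1 * D2)) by (unfold D1, D2; field; nra).
      assert (R1 : rho * (x2 - x1) <= rho * Rabs (x1 - x2)).
      { apply Rmult_le_compat_l; [lra|]. rewrite Rabs_minus_sym. apply Rle_abs. }
      assert (R2 : rho * (x2 - x1) / (D1 * D2) <= rho * Rabs (x1 - x2)).
      { assert (0 <= rho * Rabs (x1 - x2)) by (apply Rmult_le_pos; [lra| apply Rabs_pos]).
        apply Rle_trans with (rho * Rabs (x1 - x2) / (D1 * D2)).
        - unfold Rdiv. apply Rmult_le_compat_r; auto. left; apply Rinv_0_lt_compat; nra.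
        - unfold Rdiv. rewrite <- (Rmult_1_r (rho * Rabs (x1 - x2))) at 2.
          apply Rmult_le_compat_l; auto. rewrite <- Rinv_1. apply Rinv_le_contravar; nra. }
      unfold Rdiv. nra. }
  assert (Hgc : forall x, 0 < x -> continuity_pt g x).
  { intros x hx eps he.
    exists (Rmin (x/2) (eps / (rho + 1))). split.
    - apply Rmin_glb_lt; [lra| apply Rdiv_lt_0_compat; lra].
    - intros x' [[_ hne] hd]. simpl in *. unfold R_dist in *.
      generalize (Rmin_l (x/2) (eps/(rho+1))) (Rmin_r (x/2) (eps/(rho+1))); intros m1 m2.
      assert (hx' : 0 < x') by (apply Rabs_def2 in hd; lra).
      pose proof (Hlip x' x hx' hx). pose proof (Hlip x x' hx hx').
      rewrite Rabs_minus_sym in H0.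
      assert (rho * Rabs (x' - x) < eps).
      { apply Rle_lt_trans with (rho * (eps / (rho + 1))).
        - apply Rmult_le_compat_l; lra.
        - replace (rho * (eps / (rho + 1))) with (eps - eps / (rho + 1)) by (field; lra).
          generalize (Rdiv_lt_0_compat eps (rho + 1) he ltac:(lra)). lra. }
      apply Rabs_def1; lra. }
  destruct (imp_int_dominated (fun x => gamma_kernel Lc x / cc * g x) (fun x => gamma_kernel Lc x / cc) 1)
    as (v & Hv & _); auto.
  - intros x hx. apply cont_mul. apply cont_div. apply kern_cont; auto. apply cont_const. lra. auto.
  - intros x hx. apply Rmult_le_pos; auto. apply Rmult_le_pos; [left; apply kern_pos| left; apply Rinv_0_lt_compat; lra].
  - intros x hx.
    assert (0 <= gamma_kernel Lc x / cc) by (apply Rmult_le_pos; [left; apply kern_pos| left; apply Rinv_0_lt_compat; lra]).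
    specialize (Hg1 x hx). nra.
  - exists v, cc, cs, g. split; [exact Hcc|]. split; [exact Hcs|]. split; [|exact Hv].
    intros x hx. exact (Hg x hx).
Qed.


Lemma inv_le_exp rho x y th al : 0 < rho -> 0 < x -> 0 < y -> 0 <= th -> th <= 1 ->
  0 <= al -> al <= 1 ->
  / (1 + rho * x + rho * y) <= exp (- th * (ln rho + al * ln x + (1 - al) * ln y)).
Proof.
  intros hr hx hy ht1 ht2 ha1 ha2.
  assert (Lx : ln x <= ln (x + y)) by (apply ln_le; lra).
  assert (Ly : ln y <= ln (x + y)) by (apply ln_le; lra).
  assert (C : al * ln x + (1 - al) * ln y <= ln (x + y)) by nra.
  set (z := rho * (x + y)).
  assert (hz : 0 < z) by (unfold z; nra).
  assert (Lz : ln z = ln rho + ln (x + y)) by (unfold z; apply ln_mult; lra).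
  apply Rle_trans with (exp (- (th * ln z))).
  - rewrite exp_Ropp. apply Rinv_le_contravar; [apply exp_pos|].
    replace (1 + rho * x + rho * y) with (1 + z) by (unfold z; ring).
    destruct (Rle_lt_dec z 1) as [h|h].
    + assert (ln z <= 0) by (rewrite <- ln_1; apply ln_le; lra).
      assert (exp (th * ln z) <= 1) by (rewrite <- exp_0; apply exp_le_mono; nra). lra.
    + assert (0 <= ln z) by (rewrite <- ln_1; apply ln_le; lra).
      assert (exp (th * ln z) <= z) by (rewrite <- (exp_ln z) at 2 by lra; apply exp_le_mono; nra). lra.
  - apply exp_le_mono. rewrite Lz. nra.
Qed.

Lemma gk_nn L c y : 0 < c -> 0 <= gamma_kernel L y / c.
Proof. intros. apply Rmult_le_pos; [left; apply kern_pos| left; apply Rinv_0_lt_compat; lra]. Qed.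

Lemma upper Lc Ls th : 0 < Lc -> 0 < Ls -> 0 < th -> th <= 1 -> th < Lc + Ls ->
  exists Cu, 0 < Cu /\ forall rho v, 0 < rho -> ED_spec Lc Ls rho v ->
    v <= exp (- th * ln rho) * Cu.
Proof.
  intros hc hs ht1 ht2 ht3.
  set (al := Lc / (Lc + Ls)).
  assert (hal : 0 <= al <= 1).
  { unfold al; split. apply Rmult_le_pos; [lra| left; apply Rinv_0_lt_compat; lra].
    apply (Rmult_le_reg_r (Lc + Ls)); [lra|]. unfold Rdiv; rewrite Rmult_assoc, Rinv_l; lra. }
  set (bc := th * al). set (bs := th * (1 - al)).
  assert (hbc : 0 < Lc - bc).
  { unfold bc, al. replace (Lc - th * (Lc / (Lc + Ls))) with (Lc * ((Lc + Ls - th) / (Lc + Ls))) by (field; lra).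
    apply Rmult_lt_0_compat; [lra| apply Rdiv_lt_0_compat; lra]. }
  assert (hbs : 0 < Ls - bs).
  { unfold bs, al. replace (Ls - th * (1 - Lc / (Lc + Ls))) with (Ls * ((Lc + Ls - th) / (Lc + Ls))) by (field; lra).
    apply Rmult_lt_0_compat; [lra| apply Rdiv_lt_0_compat; lra]. }
  destruct (kern_bound (Lc - bc) Lc hbc hc) as (Bc & hBc & HBc).
  destruct (kern_bound (Ls - bs) Ls hbs hs) as (Bs & hBs & HBs).
  destruct (kern_imp (Lc - bc) Lc hbc hc) as [Kc HKc].
  destruct (kern_imp (Ls - bs) Ls hbs hs) as [Ks HKs].
  assert (Kc_le : Kc <= Bc) by (apply (imp_int_bound _ _ _ HKc); auto).
  assert (Ks_le : Ks <= Bs) by (apply (imp_int_bound _ _ _ HKs); auto).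
  assert (Kc_ge : 0 <= Kc) by (apply (imp_int_nonneg _ _ HKc); intros; left; apply kern_pos).
  assert (Ks_ge : 0 <= Ks) by (apply (imp_int_nonneg _ _ HKs); intros; left; apply kern_pos).
  set (c0c := Rpower (1/2) Lc * exp (- Lc) / 2).
  set (c0s := Rpower (1/2) Ls * exp (- Ls) / 2).
  assert (hc0c : 0 < c0c) by (unfold c0c, Rpower; generalize (exp_pos (- Lc)) (exp_pos (Lc * ln (1/2))); nra).
  assert (hc0s : 0 < c0s) by (unfold c0s, Rpower; generalize (exp_pos (- Ls)) (exp_pos (Ls * ln (1/2))); nra).
  exists (Bs / c0s * (Bc / c0c)). split.
  { apply Rmult_lt_0_compat; apply Rdiv_lt_0_compat; auto. }
  intros rho v hr (cc & cs & g & Hcc & Hcs & Hg & Hv).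
  assert (hcc : c0c <= cc) by (apply (kern_lim_lower Lc Lc cc hc hc Hcc)).
  assert (hcs : c0s <= cs) by (apply (kern_lim_lower Ls Ls cs hs hs Hcs)).
  set (E := exp (- th * ln rho)).
  assert (hE : 0 < E) by apply exp_pos.
  assert (Hgx : forall x, 0 < x -> g x <= E * Rpower x (- bc) / cs * Ks).
  { intros x hx.
    apply (imp_int_le (fun y => gamma_kernel Ls y / cs / (1 + rho * x + rho * y)) (fun y => E * Rpower x (- bc) / cs * kern (Ls - bs) Ls y)); auto.
    - apply imp_int_scal; auto.
    - intros y hy.
      pose proof (inv_le_exp rho x y th al hr hx hy ltac:(lra) ht2 ltac:(lra) ltac:(lra)) as H.
      assert (Eq : E * Rpower x (- bc) / cs * kern (Ls - bs) Ls y =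
                   gamma_kernel Ls y / cs * exp (- th * (ln rho + al * ln x + (1 - al) * ln y))).
      { unfold E, kern, gamma_kernel, Rpower, bc, bs.
        replace (- th * (ln rho + al * ln x + (1 - al) * ln y)) with
          (- th * ln rho + (- (th * al) * ln x) + (- (th * (1 - al)) * ln y)) by ring.
        replace ((Ls - th * (1 - al) - 1) * ln y) with ((Ls - 1) * ln y + (- (th * (1 - al)) * ln y)) by ring.
        rewrite !exp_plus. field. lra. }
      rewrite Eq. unfold Rdiv at 1. apply Rmult_le_compat_l; auto. apply gk_nn; lra. }
  assert (Hv2 : v <= E * Ks / cs / cc * Kc).
  { apply (imp_int_le _ (fun x => E * Ks / cs / cc * kern (Lc - bc) Lc x) _ _ Hv).
    - apply imp_int_scal; auto.
    - intros x hx. specialize (Hgx x hx).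
      apply Rle_trans with (gamma_kernel Lc x / cc * (E * Rpower x (- bc) / cs * Ks)).
      + apply Rmult_le_compat_l; auto. apply gk_nn; lra.
      + right. unfold kern, gamma_kernel, Rpower, bc.
        replace ((Lc - th * al - 1) * ln x) with ((Lc - 1) * ln x + (- (th * al) * ln x)) by ring.
        rewrite !exp_plus. field. lra. }
  eapply Rle_trans; [exact Hv2|].
  replace (E * Ks / cs / cc * Kc) with (E * ((Ks / cs) * (Kc / cc))) by (field; lra).
  apply Rmult_le_compat_l; [lra|].
  apply Rmult_le_compat.
  - apply Rmult_le_pos; auto. left; apply Rinv_0_lt_compat; lra.
  - apply Rmult_le_pos; auto. left; apply Rinv_0_lt_compat; lra.
  - unfold Rdiv. apply Rmult_le_compat; auto. left; apply Rinv_0_lt_compat; lra.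
    apply Rinv_le_contravar; lra.
  - unfold Rdiv. apply Rmult_le_compat; auto. left; apply Rinv_0_lt_compat; lra.
    apply Rinv_le_contravar; lra.
Qed.


Lemma lower Lc Ls : 0 < Lc -> 0 < Ls ->
  exists Bc Bs, 0 < Bc /\ 0 < Bs /\ forall rho t v, 0 < rho -> 0 < t -> t <= 1 ->
    ED_spec Lc Ls rho v ->
    Rpower (t/2) Lc * exp (- Lc) / 2 / Bc * (Rpower (t/2) Ls * exp (- Ls) / 2 / Bs)
      / (1 + 2 * rho * t) <= v.
Proof.
  intros hc hs.
  destruct (kern_bound Lc Lc hc hc) as (Bc & hBc & HBc).
  destruct (kern_bound Ls Ls hs hs) as (Bs & hBs & HBs).
  exists Bc, Bs. split; auto. split; auto.
  intros rho t v hr ht ht1 (cc & cs & g & Hcc & Hcs & Hg & Hv).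
  assert (cc_le : cc <= Bc) by (apply (imp_int_bound _ _ _ Hcc); auto).
  assert (cs_le : cs <= Bs) by (apply (imp_int_bound _ _ _ Hcs); auto).
  assert (hcc : 0 < cc).
  { eapply Rlt_le_trans; [|apply (kern_lim_lower Lc Lc cc hc hc Hcc)].
    generalize (exp_pos (- Lc)) (exp_pos (Lc * ln (1/2))). unfold Rpower. nra. }
  assert (hcs : 0 < cs).
  { eapply Rlt_le_trans; [|apply (kern_lim_lower Ls Ls cs hs hs Hcs)].
    generalize (exp_pos (- Ls)) (exp_pos (Ls * ln (1/2))). unfold Rpower. nra. }
  set (lc := Rpower (t/2) Lc * exp (- Lc) / 2).
  set (ls := Rpower (t/2) Ls * exp (- Ls) / 2).
  assert (hlc : 0 < lc) by (unfold lc, Rpower; generalize (exp_pos (- Lc)) (exp_pos (Lc * ln (t/2))); nra).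
  assert (hls : 0 < ls) by (unfold ls, Rpower; generalize (exp_pos (- Ls)) (exp_pos (Ls * ln (t/2))); nra).
  set (cD := / Bs / (1 + 2 * rho * t)).
  assert (hcD : 0 < cD) by (unfold cD; apply Rmult_lt_0_compat; apply Rinv_0_lt_compat; nra).
  set (G0 := cD * ls).
  assert (Hgx : forall x, t/2 <= x <= t -> G0 <= g x).
  { intros x hx.
    assert (hx0 : 0 < x) by lra.
    set (f := fun y => gamma_kernel Ls y / cs / (1 + rho * x + rho * y)).
    assert (hf : forall y, 0 < y -> 0 <= f y).
    { intros y hy. unfold f. apply Rmult_le_pos. apply gk_nn; lra. left; apply Rinv_0_lt_compat; nra. }
    eapply Rle_trans; [|apply (imp_int_partial_le f (g x) (Hg x hx0) hf (t/2) t); lra].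
    apply Rle_trans with (RInt (fun y => cD * kern Ls Ls y) (t/2) t).
    - rewrite RInt_scal' by (apply ex_RInt_kern; lra). unfold G0.
      apply Rmult_le_compat_l; [lra|]. apply kern_int_lower; auto.
    - apply RInt_le; try lra.
      + apply ex_RInt_scal'. apply ex_RInt_kern; lra.
      + apply (imp_int_ex f (g x) (Hg x hx0)); lra.
      + intros y hy. unfold f, cD. change (gamma_kernel Ls y) with (kern Ls Ls y).
        assert (hk := kern_pos Ls Ls y).
        assert (/ Bs <= / cs) by (apply Rinv_le_contravar; lra).
        assert (/ (1 + 2 * rho * t) <= / (1 + rho * x + rho * y)) by (apply Rinv_le_contravar; nra).
        assert (0 < / Bs) by (apply Rinv_0_lt_compat; lra).
        assert (0 < / (1 + 2 * rho * t)) by (apply Rinv_0_lt_compat; nra).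
        unfold Rdiv. 
        assert (/ Bs * / (1 + 2 * rho * t) <= / cs * / (1 + rho * x + rho * y)) by (apply Rmult_le_compat; lra).
        nra. }
  assert (hg0 : forall x, 0 < x -> 0 <= g x).
  { intros x hx. apply (imp_int_nonneg _ _ (Hg x hx)). intros y hy.
    apply Rmult_le_pos. apply gk_nn; lra. left; apply Rinv_0_lt_compat; nra. }
  set (h := fun x => gamma_kernel Lc x / cc * g x).
  assert (hh : forall x, 0 < x -> 0 <= h x).
  { intros x hx. unfold h. apply Rmult_le_pos; auto. apply gk_nn; lra. }
  assert (Hv1 : RInt h (t/2) t <= v) by (apply (imp_int_partial_le h v Hv hh); lra).
  assert (Hv2 : RInt (fun x => (G0 / Bc) * kern Lc Lc x) (t/2) t <= RInt h (t/2) t).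
  { apply RInt_le; try lra.
    + apply ex_RInt_scal'. apply ex_RInt_kern; lra.
    + apply (imp_int_ex h v Hv); lra.
    + intros x hx. unfold h. change (gamma_kernel Lc x) with (kern Lc Lc x).
      assert (hk := kern_pos Lc Lc x).
      assert (/ Bc <= / cc) by (apply Rinv_le_contravar; lra).
      assert (0 < / Bc) by (apply Rinv_0_lt_compat; lra).
      specialize (Hgx x ltac:(lra)).
      assert (0 < G0) by (unfold G0; nra).
      unfold Rdiv. 
      assert (G0 * / Bc <= g x * / cc) by (apply Rmult_le_compat; lra).
      nra. }
  rewrite RInt_scal' in Hv2 by (apply ex_RInt_kern; lra).
  assert (Hk := kern_int_lower Lc Lc t hc hc ht ht1). fold lc in Hk.
  assert (0 < G0 / Bc) by (unfold G0; apply Rdiv_lt_0_compat; nra).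
  replace (lc / Bc * (ls / Bs) / (1 + 2 * rho * t)) with (G0 / Bc * lc)
    by (unfold G0, cD; field; nra).
  apply Rle_trans with (G0 / Bc * RInt (kern Lc Lc) (t / 2) t).
  - apply Rmult_le_compat_l; lra.
  - lra.
Qed.


Lemma final_step (V : R -> R) m th K1 K2 R0 eps : 0 < eps -> m - eps/2 <= th -> th <= m ->
  (forall rho, R0 < rho -> 0 < V rho /\ - m * ln rho + K1 <= ln (V rho) /\
     ln (V rho) <= - th * ln rho + K2) ->
  exists M, forall rho, M < rho -> Rabs (- ln (V rho) / ln rho - m) < eps.
Proof.
  intros he h1 h2 HV.
  set (N := 2 * (Rabs K1 + Rabs K2) / eps + 1).
  exists (Rmax R0 (exp N)). intros rho hr.
  generalize (Rmax_l R0 (exp N)) (Rmax_r R0 (exp N)); intros m1 m2.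
  destruct (HV rho ltac:(lra)) as (hV & hl & hu).
  assert (hrho : 0 < rho) by (generalize (exp_pos N); lra).
  assert (hu0 : N < ln rho) by (rewrite <- (ln_exp N); apply ln_increasing; [apply exp_pos| lra]).
  set (u := ln rho) in *.
  assert (hN : 2 * (Rabs K1 + Rabs K2) / eps * eps = 2 * (Rabs K1 + Rabs K2)) by (field; lra).
  assert (hK : 2 * (Rabs K1 + Rabs K2) < eps * u).
  { unfold N in hu0. assert (Rabs K1 + Rabs K2 >= 0) by (generalize (Rabs_pos K1) (Rabs_pos K2); lra).
    assert (2 * (Rabs K1 + Rabs K2) / eps < u) by lra.
    assert (2 * (Rabs K1 + Rabs K2) / eps * eps < u * eps) by (apply Rmult_lt_compat_r; lra). lra. }
  assert (hu1 : 0 < u) by (generalize (Rabs_pos K1) (Rabs_pos K2); intros; nra).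
  set (q := - ln (V rho) / u).
  assert (Eq : q * u = - ln (V rho)) by (unfold q; field; lra).
  generalize (Rle_abs K1) (Rle_abs K2) (Rabs_pos K1) (Rabs_pos K2)
    (Rle_abs (- K1)) (Rle_abs (- K2)); rewrite !Rabs_Ropp; intros a1 a2 a3 a4 a5 a6.
  assert (U1 : (q - m) * u < eps / 2 * u) by nra.
  assert (U2 : (th - eps / 2 - q) * u < 0) by nra.
  apply Rabs_def1.
  - assert (q - m < eps / 2) by (apply (Rmult_lt_reg_r u); lra). lra.
  - assert (th - eps/2 - q < 0).
    { apply (Rmult_lt_reg_r u); lra. }
    lra.
Qed.

Lemma ln_LB Lc Ls Bc Bs rho t : 0 < Bc -> 0 < Bs -> 0 < rho -> 0 < t ->
  ln (Rpower (t/2) Lc * exp (- Lc) / 2 / Bc * (Rpower (t/2) Ls * exp (- Ls) / 2 / Bs)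
      / (1 + 2 * rho * t)) =
  Lc * ln (t/2) + Ls * ln (t/2) + - Lc + - Ls + - ln 2 + - ln 2 + - ln Bc + - ln Bs
  + - ln (1 + 2 * rho * t).
Proof.
  intros hBc hBs hr ht.
  match goal with |- ln ?X = ?Y => assert (X = exp Y) end.
  { assert (0 < 1 + 2 * rho * t) by nra.
    rewrite !exp_plus. unfold Rpower.
    rewrite !exp_Ropp, !exp_ln by lra. field. repeat split; apply Rgt_not_eq; first [apply exp_pos | lra]. }
  rewrite H, ln_exp. reflexivity.
Qed.

Theorem main2 Lc Ls (hc : 0 < Lc) (hs : 0 < Ls) :
  (forall ED : R -> R,
     (forall rho, 0 < rho -> ED_spec Lc Ls rho (ED rho)) ->
     forall eps, 0 < eps -> exists M, forall rho, M < rho ->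
       Rabs (- ln (ED rho) / ln rho - Rmin (Ls + Lc) 1) < eps).
Proof.
  intros ED HED eps heps.
  set (m := Rmin (Ls + Lc) 1).
  generalize (Rmin_l (Ls + Lc) 1) (Rmin_r (Ls + Lc) 1); fold m; intros m1 m2.
  assert (hm : 0 < m) by (unfold m; apply Rmin_glb_lt; lra).
  set (th := m - Rmin (eps/2) (m/2)).
  generalize (Rmin_l (eps/2) (m/2)) (Rmin_r (eps/2) (m/2)) (Rmin_glb_lt (eps/2) (m/2) 0 ltac:(lra) ltac:(lra));
    fold th; intros n1 n2 n3.
  assert (ht1 : m - eps/2 <= th) by (unfold th; lra).
  assert (ht2 : th <= m) by (unfold th; lra).
  assert (ht3 : 0 < th) by (unfold th; lra).
  destruct (upper Lc Ls th hc hs ht3 ltac:(unfold th; lra) ltac:(unfold th; lra)) as (Cu & hCu & HU).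
  destruct (lower Lc Ls hc hs) as (Bc & Bs & hBc & hBs & HL).
  set (K0 := - ln 2 + - ln 2 + - ln Bc + - ln Bs).
  destruct (Rle_lt_dec (Ls + Lc) 1) as [hL|hL].
  -
    assert (em : m = Ls + Lc) by (unfold m; apply Rmin_left; lra).
    apply (final_step ED m th ((Lc + Ls) * (- ln 2) + - Lc + - Ls + K0 + - ln 3) (ln Cu) 1 eps); auto.
    intros rho hr.
    assert (hr0 : 0 < rho) by lra.
    pose proof (HL rho (/ rho) (ED rho) hr0 ltac:(apply Rinv_0_lt_compat; lra)
      ltac:(rewrite <- Rinv_1; apply Rinv_le_contravar; lra) (HED rho hr0)) as Hlow.
    set (LB := Rpower (/ rho / 2) Lc * exp (- Lc) / 2 / Bc * (Rpower (/ rho / 2) Ls * exp (- Ls) / 2 / Bs)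
      / (1 + 2 * rho * / rho)) in Hlow.
    assert (hLB : 0 < LB).
    { unfold LB, Rpower. generalize (exp_pos (- Lc)) (exp_pos (- Ls)) (exp_pos (Lc * ln (/rho/2))) (exp_pos (Ls * ln (/rho/2))).
      intros. assert (0 < / rho) by (apply Rinv_0_lt_compat; lra).
      repeat (apply Rmult_lt_0_compat || apply Rinv_0_lt_compat); nra. }
    assert (hV : 0 < ED rho) by lra.
    split; [auto|]. split.
    + apply Rle_trans with (ln LB); [|apply ln_le; lra].
      unfold LB. rewrite ln_LB by (auto; apply Rinv_0_lt_compat; lra).
      assert (E1 : ln (/ rho / 2) = - ln rho + - ln 2).
      { unfold Rdiv. rewrite ln_mult, !ln_Rinv; try lra; apply Rinv_0_lt_compat; lra. }
      replace (1 + 2 * rho * / rho) with 3 by (field; lra).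
      rewrite E1, em. unfold K0. right. ring.
    + apply Rle_trans with (ln (exp (- th * ln rho) * Cu)).
      * apply ln_le; auto.
      * rewrite ln_mult, ln_exp by (auto; apply exp_pos). lra.
  -
    assert (em : m = 1) by (unfold m; apply Rmin_right; lra).
    apply (final_step ED m th ((Lc + Ls) * ln (1/2) + - Lc + - Ls + K0 + - ln 3) (ln Cu) 1 eps); auto.
    intros rho hr.
    assert (hr0 : 0 < rho) by lra.
    pose proof (HL rho 1 (ED rho) hr0 ltac:(lra) ltac:(lra) (HED rho hr0)) as Hlow.
    set (LB := Rpower (1 / 2) Lc * exp (- Lc) / 2 / Bc * (Rpower (1 / 2) Ls * exp (- Ls) / 2 / Bs)
      / (1 + 2 * rho * 1)) in Hlow.
    assert (hLB : 0 < LB).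
    { unfold LB, Rpower. generalize (exp_pos (- Lc)) (exp_pos (- Ls)) (exp_pos (Lc * ln (1/2))) (exp_pos (Ls * ln (1/2))).
      intros. repeat (apply Rmult_lt_0_compat || apply Rinv_0_lt_compat); nra. }
    assert (hV : 0 < ED rho) by lra.
    split; [auto|]. split.
    + apply Rle_trans with (ln LB); [|apply ln_le; lra].
      unfold LB. rewrite ln_LB by (auto; lra).
      assert (E1 : ln (1 + 2 * rho * 1) <= ln 3 + ln rho).
      { rewrite <- ln_mult by lra. apply ln_le; lra. }
      rewrite em. unfold K0. lra.
    + apply Rle_trans with (ln (exp (- th * ln rho) * Cu)).
      * apply ln_le; auto.
      * rewrite ln_mult, ln_exp by (auto; apply exp_pos). lra.
Qed.


Theorem lemma7 (Lc Ls : R) (hc : 0 < Lc) (hs : 0 < Ls) :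
  (forall rho, 0 < rho -> exists v, ED_spec Lc Ls rho v) /\
  (forall ED : R -> R,
     (forall rho, 0 < rho -> ED_spec Lc Ls rho (ED rho)) ->
     forall eps, 0 < eps -> exists M, forall rho, M < rho ->
       Rabs (- ln (ED rho) / ln rho - Rmin (Ls + Lc) 1) < eps).
Proof.
  split.
  - intros rho hr. apply part1; auto.
  - apply main2; auto.
Qed.
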